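(* For every vertex $(r,t,s)$ of the Farey tree $\mathrm{F}\mathbb T$, one has $\Omega(t)=\Omega(r)^{-1}\,xyz\,\Omega(s)^{-1}$ in $\mathfrak F_3$.
   Context: $\mathfrak F_3$ is the free group on $\{x,y,z\}$. Farey tree $\mathrm{F}\mathbb T$: rooted planar binary tree with root $(\frac01,\frac11,\frac10)$, and each vertex $(\frac ab,\frac cd,\frac ef)$ has left child $(\frac ab,\frac{a+c}{b+d},\frac cd)$ and right child $(\frac cd,\frac{c+e}{d+f},\frac ef)$; $\frac10$ represents $\infty$. Every positive rational $t$ occurs as the middle entry of exactly one vertex. Word tree $\mathrm{W}\mathbb T$: rooted planar binary tree with vertices in $\mathfrak F_3^3$, root $(x,y,z)$, and a vertex $(a,b,c)$ has left child $(a,bcb^{-1},b)$ and right child $(b,b^{-1}ab,c)$. $\Omega(t)$ for positive rational $t$: the middle entry of the vertex of $\mathrm{W}\mathbb T$ at the same position (same sequence of left/right moves from the root) as the unique vertex of $\mathrm{F}\mathbb T$ with middle entry $t$; $\Omega(\frac01)=x$, $\Omega(\frac10)=z$. *)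

(* Defs.v *)
From mathcomp Require Import all_boot.
From Stdlib Require Import ClassicalEpsilon.
Set Implicit Arguments. Unset Strict Implicit. Unset Printing Implicit Defensive.

(** * The free group F_3 on {x, y, z}
    Elements are represented by words over letters (generator, inverted?);
    a word denotes a group element, and two words are equal in F_3 iff they
    have the same free reduction. *)
Definition letter := ('I_3 * bool)%type.
Definition word := seq letter.

Definition inv_letter (l : letter) : letter := (l.1, ~~ l.2).

Definition push (l : letter) (w : word) : word :=
  match w with
  | l' :: w' => if l' == inv_letter l then w' else l :: w
  | [::] => [:: l]
  end.

Definition reduce (w : word) : word := foldr push [::] w.

Definition F3eq (u v : word) : Prop := reduce u = reduce v.

Definition wmul (u v : word) : word := u ++ v.
Definition winv (u : word) : word := rev (map inv_letter u).

Definition gen (i : 'I_3) : word := [:: (i, false)].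
Definition gx : word := gen (@Ordinal 3 0 isT).
Definition gy : word := gen (@Ordinal 3 1 isT).
Definition gz : word := gen (@Ordinal 3 2 isT).

(** * Fractions a/b as pairs (a, b); 1/0 represents infinity. *)
Definition frac := (nat * nat)%type.
Definition frac_eq (f g : frac) : bool := f.1 * g.2 == f.2 * g.1.

(** * Positions in a rooted planar binary tree: sequence of moves from the
    root, first move first; false = left child, true = right child. *)
Definition tpath := seq bool.

Definition ftvertex := (frac * frac * frac)%type.
Definition ft_root : ftvertex := ((0, 1), (1, 1), (1, 0)).
Definition ft_child (v : ftvertex) (right : bool) : ftvertex :=
  let: (a, c, e) := v in
  let m1 := (a.1 + c.1, a.2 + c.2) in
  let m2 := (c.1 + e.1, c.2 + e.2) in
  if right then (c, m2, e) else (a, m1, c).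
Definition FT (p : tpath) : ftvertex := foldl ft_child ft_root p.

Definition wtvertex := (word * word * word)%type.
Definition wt_root : wtvertex := (gx, gy, gz).
Definition wt_child (v : wtvertex) (right : bool) : wtvertex :=
  let: (a, b, c) := v in
  if right then (b, wmul (winv b) (wmul a b), c)
  else (a, wmul b (wmul c (winv b)), b).
Definition WT (p : tpath) : wtvertex := foldl wt_child wt_root p.

Definition mid3 {T : Type} (v : T * T * T) : T := v.1.2.

(** * Omega: Omega(0/1) = x, Omega(1/0) = z; for a positive rational t,
    the middle entry of the WT-vertex at the position of the (unique)
    FT-vertex whose middle entry is t. *)
Definition Omega (t : frac) : word :=
  if t.2 == 0 then gz
  else if t.1 == 0 then gx
  else match excluded_middle_informative
               (exists p : tpath, frac_eq (mid3 (FT p)) t) with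
       | left H => mid3 (WT (proj1_sig (constructive_indefinite_description _ H)))
       | right _ => [::]
       end.

(* Main.v *)
Require Import Defs.
From mathcomp Require Import all_boot.
From mathcomp Require Import zify.
From Stdlib Require Import ClassicalEpsilon.

Lemma inv_inv l : inv_letter (inv_letter l) = l.
Proof. by case: l => a b; rewrite /inv_letter /= negbK. Qed.

Fixpoint red (w : word) : bool :=
  match w with
  | a :: ((b :: _) as w') => (b != inv_letter a) && red w'
  | _ => true
  end.

Lemma red_tail a w : red (a :: w) -> red w.
Proof. by case: w => //= b w /andP[]. Qed.

Lemma push_red l w : red w -> red (push l w).
Proof.
case: w => [//|a w] /= H.
case: ifP => [_|/negbT Ha]; first exact: red_tail H.
by rewrite /= Ha.
Qed.

Lemma push_inv l w : red w -> push (inv_letter l) (push l w) = w.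
Proof.
case: w => [|a w] /=; first by rewrite inv_inv eqxx.
case: ifP => [/eqP Ha|/negbT Ha] H.
  case: w H => [|b w] /=.
    by move=> _; rewrite Ha.
  case/andP=> Hb _; rewrite Ha in Hb.
  by rewrite (negbTE Hb) Ha.
by rewrite /push inv_inv eqxx.
Qed.

Definition act (u w : word) : word := foldr push w u.

Lemma act_red u w : red w -> red (act u w).
Proof. by elim: u => //= l u IH Hw; apply: push_red; apply: IH. Qed.

Lemma reduce_red u : red (reduce u).
Proof. exact: (@act_red u [::]). Qed.

Lemma act_cat u v w : act (u ++ v) w = act u (act v w).
Proof. by rewrite /act foldr_cat. Qed.

Lemma reduce_cat u v : reduce (u ++ v) = act u (reduce v).
Proof. by rewrite /reduce foldr_cat. Qed.

Lemma winv_cons l u : winv (l :: u) = winv u ++ [:: inv_letter l].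
Proof. by rewrite /winv /= rev_cons cats1. Qed.

Lemma winvK u : winv (winv u) = u.
Proof. by rewrite /winv map_rev revK (mapK inv_inv). Qed.

Lemma act_winv u w : red w -> act (winv u) (act u w) = w.
Proof.
elim: u w => //= l u IH w Hw.
rewrite winv_cons act_cat /= push_inv ?IH //.
exact: act_red.
Qed.

Lemma act_winv' u w : red w -> act u (act (winv u) w) = w.
Proof. by move=> Hw; rewrite -{1}(winvK u) act_winv. Qed.

Lemma act_reduce u w : red w -> act u w = act (reduce u) w.
Proof.
move=> Hw; elim: u => //= l u IH.
rewrite IH.
have Hr := reduce_red u.
rewrite /reduce /= -/(reduce u).
case E: (reduce u) Hr => [|a r] Hr //=.
case: ifP => [/eqP Ha|_] //=.
rewrite /act /= -/(act r w) Ha -{1}(inv_inv l) push_inv //.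
by apply: act_red.
Qed.

Definition Xw : word := gx ++ gy ++ gz.

Definition winv_ok (v : wtvertex) : Prop :=
  let: (A, B, C) := v in
  reduce B = reduce (winv A ++ Xw ++ winv C).

Lemma WT_ok p : winv_ok (WT p).
Proof.
elim/last_ind: p => [|p b IH]; first by vm_compute.
rewrite /WT foldl_rcons -/(WT p).
case: (WT p) IH => [[A B] C] IH.
case: b; rewrite /wt_child /winv_ok /wmul.
  rewrite reduce_cat [RHS]reduce_cat; congr act.
  rewrite reduce_cat IH -catA reduce_cat act_winv' //; exact: reduce_red.
have Hr := reduce_red (winv B).
rewrite catA reduce_cat (catA (winv A)) [RHS]reduce_cat.
rewrite act_cat (act_reduce B) ?act_red // IH -act_reduce ?act_red //.
by rewrite catA act_cat act_winv.
Qed.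

Definition Inv (v : ftvertex) : Prop :=
  let: (r, t, s) := v in
  t.1 = r.1 + s.1 /\ t.2 = r.2 + s.2 /\ s.1 * r.2 = r.1 * s.2 + 1.

Definition flt (f g : frac) : Prop := f.1 * g.2 < g.1 * f.2.

Lemma Inv_child v b : Inv v -> Inv (ft_child v b).
Proof.
case: v => [[[a1 a2] [c1 c2]] [e1 e2]] /= [H1 [H2 H3]].
case: b => /=; split => //; split => //; subst; nia.
Qed.

Lemma Inv_foldl v p : Inv v -> Inv (foldl ft_child v p).
Proof. by elim: p v => //= b p IH v Hv; apply: IH; apply: Inv_child. Qed.

Lemma Inv_pos v : Inv v -> 0 < (mid3 v).1 /\ 0 < (mid3 v).2.
Proof.
case: v => [[[a1 a2] [c1 c2]] [e1 e2]] /= [H1 [H2 H3]]; subst; nia.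
Qed.

Lemma flt_trans f g h : 0 < f.2 -> 0 < g.2 -> flt f g -> flt g h -> flt f h.
Proof.
case: f g h => [f1 f2] [g1 g2] [h1 h2]; rewrite /flt /= => Hf Hg H1 H2.
have A : f1 * g2 * h2 <= g1 * f2 * h2 by apply: leq_mul => //; apply: ltnW.
have B : g1 * h2 * f2 < h1 * g2 * f2 by rewrite ltn_pmul2r.
have C : f1 * h2 * g2 < h1 * f2 * g2 by nia.
by rewrite ltn_pmul2r in C.
Qed.

Lemma Inv_bounds v p : Inv v ->
  let: (r, t, s) := v in
  flt r (mid3 (foldl ft_child v p)) /\ flt (mid3 (foldl ft_child v p)) s.
Proof.
elim: p v => [|b p IH] v.
  case: v => [[[a1 a2] [c1 c2]] [e1 e2]] /= [H1 [H2 H3]]; rewrite /flt /=; subst; nia.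
move=> Hv /=; have Hc : Inv (ft_child v b) by apply: Inv_child.
have := IH _ Hc.
have Hfp : Inv (foldl ft_child (ft_child v b) p) by apply: Inv_foldl.
have [_ Hp] := Inv_pos _ Hfp.
case: v Hv Hc Hfp Hp => [[r t] s] Hv Hc Hfp Hp.
have [_ Ht] := Inv_pos _ Hv.
have : flt r t /\ flt t s.
  case: r t s Hv {Hc Hfp Hp Ht} => [a1 a2] [c1 c2] [e1 e2] /= [H1 [H2 H3]]; rewrite /flt /=; subst; split; nia.
case=> Hrt Hts.
case: b Hc Hfp Hp => /= Hc Hfp Hp [H1 H2]; split => //.
  have Hr : 0 < r.2.
    case: r t s Hv {Hc Hfp Hp Ht Hrt Hts H1 H2} => [a1 a2] [c1 c2] [e1 e2] /= [_ [_ H3]].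
    nia.
  exact: (flt_trans _ _ _ Hr Ht Hrt H1).
exact: (flt_trans _ _ _ Hp Ht H2 Hts).
Qed.

Lemma flt_neq f g : flt f g -> ~~ frac_eq f g && ~~ frac_eq g f.
Proof. case: f g => [f1 f2] [g1 g2]; rewrite /flt /frac_eq /= => H; apply/andP; split; apply/eqP; nia. Qed.

Lemma Inv_child_bounds v b p : Inv v ->
  let: (r, t, s) := v in
  let m := mid3 (foldl ft_child (ft_child v b) p) in
  if b then flt t m else flt m t.
Proof.
move=> Hv; have Hc : Inv (ft_child v b) by apply: Inv_child.
have := Inv_bounds _ p Hc.
by case: v {Hv Hc} => [[r t] s]; case: b => /= [[]|[]].
Qed.

Lemma FT_inj v p q : Inv v ->
  frac_eq (mid3 (foldl ft_child v p)) (mid3 (foldl ft_child v q)) -> p = q.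
Proof.
elim: p v q => [|b p IH] v [|b' q] Hv E //.
- have := Inv_child_bounds _ b' q Hv.
  case: v Hv E => [[r t] s] Hv /= E.
  by case: b' E => /= E /flt_neq; rewrite E ?andbF.
- have := Inv_child_bounds _ b p Hv.
  case: v Hv E => [[r t] s] Hv /= E.
  by case: b E => /= E /flt_neq; rewrite E ?andbF.
have Hc : Inv (ft_child v b) by apply: Inv_child.
have Hc' : Inv (ft_child v b') by apply: Inv_child.
have [_ Hp] := Inv_pos _ (Inv_foldl _ p Hc).
have [_ Hq] := Inv_pos _ (Inv_foldl _ q Hc').
have := Inv_child_bounds _ b p Hv.
have := Inv_child_bounds _ b' q Hv.
have [_ Ht] := Inv_pos _ Hv.
case: v Hv Hc Hc' Hp Hq E Ht => [[r t] s] Hv Hc Hc' Hp Hq /= E Ht.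
case: b b' Hc Hc' Hp Hq E => [] [] Hc Hc' Hp Hq E /= Hb' Hb.
- by congr cons; apply: (IH _ _ Hc).
- by have /flt_neq := flt_trans _ _ _ Hq Ht Hb' Hb; rewrite E andbF.
- by have /flt_neq := flt_trans _ _ _ Hp Ht Hb Hb'; rewrite E.
- by congr cons; apply: (IH _ _ Hc).
Qed.

Lemma Inv_root : Inv ft_root.
Proof. by []. Qed.

Lemma Omega_mid q : Omega (mid3 (FT q)) = mid3 (WT q).
Proof.
have Hi := Inv_foldl _ q Inv_root.
have [H1 H2] := Inv_pos _ Hi.
have {H1}H1 : 0 < (mid3 (FT q)).1 := H1.
have {H2}H2 : 0 < (mid3 (FT q)).2 := H2.
rewrite /Omega (gtn_eqF H1) (gtn_eqF H2).
case: excluded_middle_informative => [H|H]; last first.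
  by exfalso; apply: H; exists q; rewrite /frac_eq mulnC eqxx.
case: (constructive_indefinite_description _ H) => p' Hp' /=.
by rewrite (FT_inj _ _ _ Inv_root Hp').
Qed.

Lemma endpoints p :
  let: (r, t, s) := FT p in
  let: (A, B, C) := WT p in
  [/\ Omega r = A, Omega t = B & Omega s = C].
Proof.
have Hm := Omega_mid p.
elim/last_ind: p Hm => [|p b IH] Hm.
  by split; [rewrite /Omega | exact: Hm | rewrite /Omega].
have := IH (Omega_mid p).
move: Hm; rewrite /FT /WT !foldl_rcons -/(FT p) -/(WT p).
case: (FT p) => [[r t] s]; case: (WT p) => [[A B] C].
by case: b; rewrite /ft_child /wt_child => Hm [Hr Ht Hs]; split.
Qed.

Theorem lemma3p8 (p : tpath) :
  let: (r, t, s) := FT p in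
  F3eq (Omega t) (wmul (winv (Omega r)) (wmul (gx ++ gy ++ gz) (winv (Omega s)))).
Proof.
have := endpoints p; have := WT_ok p.
case: (FT p) => [[r t] s]; case: (WT p) => [[A B] C] /= H [-> -> ->].
exact: H.
Qed.
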